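(* Fix any total budget $\mathrm{TB}\in\mathbb N_0$ and let $n\in\mathbb N$. Then the disjunctive sum $n+\bar n=0$, where $n$ denotes the integer game form.
   Context: Game forms are defined recursively: $G=\{G^{\mathcal L}\mid G^{\mathcal R}\}$ with finite sets of Left and Right options, and finite birthday. $0=\{\varnothing\mid\varnothing\}$; for $n\in\mathbb N$ the integer game form is $n=\{n-1\mid\varnothing\}$. The conjugate is $\bar G=\{\overline{G^{\mathcal R}}\mid\overline{G^{\mathcal L}}\}$. The budget set for total budget $\mathrm{TB}$ is $\mathcal B=\{0,\dots,\mathrm{TB},\hat 0,\dots,\widehat{\mathrm{TB}}\}$: state $p$ (resp. $\hat p$) means Left holds $p$ dollars and Right holds $\mathrm{TB}-p$, and Right (resp. Left) holds the tie-breaking marker. Play of $(G,\tilde p)$: at every position (terminal ones included) both players bid simultaneously, Left $\ell\in\{0,\dots,p\}$, Right $r\in\{0,\dots,\mathrm{TB}-p\}$. If Left holds the marker (state $\hat p$): if $\ell>r$ Left moves to $(G^L,\widehat{p-\ell})$, or, including the marker (allowed when $\ell\ge r$), to $(G^L,p-\ell)$; if $\ell=r$ Left wins, the marker passes to Right, play continues at $(G^L,p-\ell)$; if $\ell<r$ Right moves to $(G^R,\widehat{p+r})$. Symmetrically when Right holds the marker (state $p$): if $r>\ell$ Right moves to $(G^R,p+r)$ or, including the marker, to $(G^R,\widehat{p+r})$; if $r=\ell$ Right wins, the marker passes to Left, play continues at $(G^R,\widehat{p+r})$; if $r<\ell$ Left moves to $(G^L,p-\ell)$. A player who wins a bid but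 has no option loses. $o(G,\tilde p)\in\{\mathrm L,\mathrm R\}$ is the winner under optimal play; $\mathrm L>\mathrm R$. Disjunctive sum $G+H=\{G^{\mathcal L}+H,G+H^{\mathcal L}\mid G^{\mathcal R}+H,G+H^{\mathcal R}\}$. $G\ge H$ means $o(G+X,\tilde p)\ge o(H+X,\tilde p)$ for all game forms $X$ and all $\tilde p\in\mathcal B$; $G=H$ means $G\ge H$ and $H\ge G$. *)

(* Defs.v *)
From mathcomp Require Import all_boot.
Set Implicit Arguments. Unset Strict Implicit. Unset Printing Implicit Defensive.

(* Game forms: finite lists of Left / Right options; finite birthday is automatic
   for an inductive type. *)
Inductive game : Type := Game of seq game & seq game.

Definition zero : game := Game [::] [::].

Fixpoint intg (n : nat) : game :=
  match n with 0 => zero | n'.+1 => Game [:: intg n'] [::] end.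

Fixpoint conj (G : game) : game :=
  match G with Game L R => Game (map conj R) (map conj L) end.

Fixpoint gsum (G H : game) {struct G} : game :=
  match G with
  | Game GL GR =>
    let fix aux (H : game) : game :=
      match H with
      | Game HL HR =>
        Game (map (fun g => gsum g H) GL ++ map aux HL)
             (map (fun g => gsum g H) GR ++ map aux HR)
      end in aux H
  end.

(* Budget state: p = Left's dollars (Right holds TB - p);
   lm = true  : state \hat p (Left holds the tie-breaking marker),
   lm = false : state p      (Right holds the marker).
   [lwins TB G p lm] is true iff o(G, state) = L under optimal play, i.e. Left
   has a bid l in {0..p} such that for every Right bid r in {0..TB-p} the
   resulting continuation is won by Left (a player winning a bid chooses the
   option and, when allowed, whether to include the marker). A player who wins
   a bid but has no option loses. *)
Fixpoint lwins (TB : nat) (G : game) (p : nat) (lm : bool) {struct G} : bool :=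
  match G with
  | Game GL GR =>
    let Lmove p' lm' := has (fun g => lwins TB g p' lm') GL in
    let Rmove p' lm' := has (fun g => ~~ lwins TB g p' lm') GR in
    [exists l : 'I_p.+1, [forall r : 'I_(TB - p).+1,
      if lm then
        (if r < l then Lmove (p - l) true || Lmove (p - l) false
         else if l == r :> nat then Lmove (p - l) false
         else ~~ Rmove (p + r) true)
      else
        (if l < r then ~~ (Rmove (p + r) false || Rmove (p + r) true)
         else if l == r :> nat then ~~ Rmove (p + r) true
         else Lmove (p - l) false)]]
  end.

Definition game_ge (TB : nat) (G H : game) : Prop :=
  forall (X : game) (p : nat) (lm : bool), p <= TB ->
    lwins TB (gsum H X) p lm -> lwins TB (gsum G X) p lm.

Definition game_eq (TB : nat) (G H : game) : Prop :=
  game_ge TB G H /\ game_ge TB H G.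

(* Main.v *)
Require Import Defs.
From mathcomp Require Import all_boot zify.
Set Implicit Arguments. Unset Strict Implicit. Unset Printing Implicit Defensive.

Fixpoint game_ind2 (P : game -> Prop)
  (H : forall GL GR, (forall g, List.In g GL -> P g) -> (forall g, List.In g GR -> P g) -> P (Game GL GR))
  (G : game) {struct G} : P G :=
  match G with
  | Game GL GR =>
    H GL GR
      ((fix fl (l : seq game) : forall g, List.In g l -> P g :=
        match l with
        | nil => fun g (hi : List.In g nil) => match hi with end
        | cons x l' => fun g hi => match hi with
                                   | or_introl e => eq_ind x P (game_ind2 H x) g e
                                   | or_intror hi' => fl l' g hi' end
        end) GL)
      ((fix fl (l : seq game) : forall g, List.In g l -> P g :=
        match l with
        | nil => fun g (hi : List.In g nil) => match hi with end
        | cons x l' => fun g hi => match hi with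
                                   | or_introl e => eq_ind x P (game_ind2 H x) g e
                                   | or_intror hi' => fl l' g hi' end
        end) GR)
  end.

Lemma has_in_mono (T : Type) (a1 a2 : pred T) (s : seq T) :
  (forall x, List.In x s -> a1 x -> a2 x) -> has a1 s -> has a2 s.
Proof.
elim: s => [|x s IH] // H /= /orP [h|h]; apply/orP.
- by left; apply: H h; left.
- by right; apply: IH h => y hy; apply: H; right.
Qed.

Definition LM TB (GL : seq game) p m := has (fun g => lwins TB g p m) GL.
Definition RM TB (GR : seq game) p m := has (fun g => ~~ lwins TB g p m) GR.
Definition body TB GL GR p (lm : bool) (l r : nat) : bool :=
  if lm then
    (if r < l then LM TB GL (p - l) true || LM TB GL (p - l) false
     else if l == r then LM TB GL (p - l) false
     else ~~ RM TB GR (p + r) true)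
  else
    (if l < r then ~~ (RM TB GR (p + r) false || RM TB GR (p + r) true)
     else if l == r then ~~ RM TB GR (p + r) true
     else LM TB GL (p - l) false).

Lemma lwins_unfold TB GL GR p lm : lwins TB (Game GL GR) p lm =
  [exists l : 'I_p.+1, [forall r : 'I_(TB - p).+1, body TB GL GR p lm l r]].
Proof. by []. Qed.

Lemma lwinsP TB GL GR p lm : lwins TB (Game GL GR) p lm <->
  exists2 l, l <= p & forall r, r <= TB - p -> body TB GL GR p lm l r.
Proof.
rewrite lwins_unfold; split.
- case/existsP => l /forallP H; exists l; first by rewrite -ltnS.
  by move=> r hr; have := H (Ordinal (hr : r < (TB - p).+1)).
- case=> l hl H; apply/existsP; exists (Ordinal (hl : l < p.+1)); apply/forallP => r.
  by apply: H; rewrite -ltnS.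
Qed.

Lemma nlwinsP TB GL GR p lm : ~~ lwins TB (Game GL GR) p lm <->
  forall l, l <= p -> exists2 r, r <= TB - p & ~~ body TB GL GR p lm l r.
Proof.
rewrite lwins_unfold negb_exists; split.
- move/forallP => H l hl; have := H (Ordinal (hl : l < p.+1)).
  rewrite negb_forall => /existsP [r hr]; exists r => //; by rewrite -ltnS.
- move=> H; apply/forallP => l; have [r hr hb] := H l (ltn_ord l : l <= p).
  rewrite negb_forall; apply/existsP; by exists (Ordinal (hr : r < (TB - p).+1)).
Qed.



Lemma bT_lt TB GL GR p l r : r < l -> body TB GL GR p true l r = LM TB GL (p - l) true || LM TB GL (p - l) false.
Proof. by rewrite /body => ->. Qed.
Lemma bT_eq TB GL GR p l : body TB GL GR p true l l = LM TB GL (p - l) false.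
Proof. by rewrite /body ltnn eqxx. Qed.
Lemma bT_gt TB GL GR p l r : l < r -> body TB GL GR p true l r = ~~ RM TB GR (p + r) true.
Proof. by rewrite /body => h; rewrite ltnNge (ltnW h) /= (ltn_eqF h). Qed.
Lemma bF_lt TB GL GR p l r : l < r -> body TB GL GR p false l r = ~~ (RM TB GR (p + r) false || RM TB GR (p + r) true).
Proof. by rewrite /body => ->. Qed.
Lemma bF_eq TB GL GR p l : body TB GL GR p false l l = ~~ RM TB GR (p + l) true.
Proof. by rewrite /body ltnn eqxx. Qed.
Lemma bF_gt TB GL GR p l r : r < l -> body TB GL GR p false l r = LM TB GL (p - l) false.
Proof. by rewrite /body => h; rewrite ltnNge (ltnW h) /= (gtn_eqF h). Qed.

Definition cfg a b Y := gsum (gsum (intg a) (conj (intg b))) Y.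
Definition passL a b Y := if a is a'.+1 then [:: cfg a' b Y] else [::].
Definition passR a b Y := if b is b'.+1 then [:: cfg a b' Y] else [::].
Lemma cfg_eq a b YL YR : cfg a b (Game YL YR) =
  Game (passL a b (Game YL YR) ++ map (cfg a b) YL) (passR a b (Game YL YR) ++ map (cfg a b) YR).
Proof. by case: a; case: b. Qed.

Lemma LM_mono TB GL q m q' m' :
  (forall g, List.In g GL -> lwins TB g q m -> lwins TB g q' m') -> LM TB GL q m -> LM TB GL q' m'.
Proof. exact: has_in_mono. Qed.
Lemma RM_mono TB GR q m q' m' :
  (forall g, List.In g GR -> lwins TB g q' m' -> lwins TB g q m) -> RM TB GR q m -> RM TB GR q' m'.
Proof. move=> H; apply: has_in_mono => g hg; apply: contra; exact: H. Qed.

Lemma L1 TB G p m : lwins TB G p m -> lwins TB G p.+1 m.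
Proof.
elim/game_ind2: G p m => GL GR IHL IHR p m /lwinsP [l hl H].
apply/lwinsP; exists l; first lia.
move=> r hr; have := H r ltac:(lia); clear H.
have e1 : p.+1 - l = (p - l).+1 by lia.
have e2 : p.+1 + r = (p + r).+1 by lia.
case: m; case: (ltngtP l r) => h.
- rewrite !bT_gt // e2; apply: contra; apply: RM_mono => g hg; exact: IHR.
- rewrite !bT_lt // e1 => /orP [h1|h1]; apply/orP; [left|right];
    by apply: LM_mono h1 => g hg; exact: IHL.
- rewrite -h !bT_eq e1; by apply: LM_mono => g hg; exact: IHL.
- rewrite !bF_lt // e2 => h1; apply/negP => /orP [h2|h2]; move/negP: h1; apply; apply/orP;
    [left|right]; by apply: RM_mono h2 => g hg; exact: IHR.
- rewrite !bF_gt // e1; by apply: LM_mono => g hg; exact: IHL.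
- move: e2; rewrite -h !bF_eq => ->; apply: contra; apply: RM_mono => g hg; exact: IHR.
Qed.

Lemma L1s TB G p p' m : p <= p' -> lwins TB G p m -> lwins TB G p' m.
Proof.
move=> /subnK <-; elim: (p' - p) => [|k IH] // h.
by rewrite addSn; apply: L1; exact: IH.
Qed.

Lemma L2 TB G p : p < TB -> lwins TB G p true -> lwins TB G p.+1 false.
Proof.
elim/game_ind2: G p => GL GR IHL IHR p hp /lwinsP [l hl H].
apply/lwinsP; case: (leqP l (TB - p)) => hlt.
- exists l.+1; first lia.
  move=> r hr; case: (ltngtP l.+1 r) => h.
  + rewrite bF_lt //; have := H r ltac:(lia); rewrite bT_gt; last lia.
    move=> h1; apply/negP => /orP [h2|h2]; move/negP: h1; apply.
    * apply: RM_mono h2 => g hg h3; have -> : p.+1 + r = (p + r).+1 by lia.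
      apply: IHR => //; lia.
    * apply: RM_mono h2 => g hg h3; apply: L1s h3; lia.
  + rewrite bF_gt //; have := H l hlt; rewrite bT_eq; by rewrite subSS.
  + rewrite -h bF_eq; have := H l.+1 ltac:(lia); rewrite bT_gt //.
    apply: contra; apply: RM_mono => g hg h3; apply: L1s h3; lia.
- exists l; first lia. move=> r hr; rewrite bF_gt; last lia.
  have := H r ltac:(lia); rewrite bT_lt; last lia.
  have -> : p.+1 - l = (p - l).+1 by lia.
  case/orP => h1; apply: LM_mono h1 => g hg h3.
  + apply: IHL => //; lia.
  + exact: L1.
Qed.

Lemma body_mono TB GL GR HL HR p m l r : p <= TB -> l <= p -> r <= TB - p ->
  (forall q m, q <= TB -> LM TB GL q m -> LM TB HL q m) ->
  (forall q m, q <= TB -> RM TB HR q m -> RM TB GR q m) ->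
  body TB GL GR p m l r -> body TB HL HR p m l r.
Proof.
move=> hp hl hr HL' HR'.
have q1 : p - l <= TB by lia.
have q2 : p + r <= TB by lia.
rewrite /body; case: m; case: ifP => _; try case: ifP => _.
- by case/orP => h; apply/orP; [left|right]; apply: HL'.
- exact: HL'.
- by apply: contra; apply: HR'.
- by apply: contra => /orP [h|h]; apply/orP; [left|right]; apply: HR'.
- by apply: contra; apply: HR'.
- exact: HL'.
Qed.

Lemma lwins_mono TB GL GR HL HR p m : p <= TB ->
  (forall q m, q <= TB -> LM TB GL q m -> LM TB HL q m) ->
  (forall q m, q <= TB -> RM TB HR q m -> RM TB GR q m) ->
  lwins TB (Game GL GR) p m -> lwins TB (Game HL HR) p m.
Proof.
move=> hp HL' HR' /lwinsP [l hl H]; apply/lwinsP; exists l => // r hr.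
exact: (body_mono hp hl hr HL' HR' (H r hr)).
Qed.

Definition W TB a b Y p m := lwins TB (cfg a b Y) p m.

Lemma WP TB a b YL YR p m : W TB a b (Game YL YR) p m <->
  exists2 l, l <= p & forall r, r <= TB - p ->
   body TB (passL a b (Game YL YR) ++ map (cfg a b) YL) (passR a b (Game YL YR) ++ map (cfg a b) YR) p m l r.
Proof. by rewrite /W cfg_eq lwinsP. Qed.

Lemma nWP TB a b YL YR p m : ~~ W TB a b (Game YL YR) p m <->
  forall l, l <= p -> exists2 r, r <= TB - p &
   ~~ body TB (passL a b (Game YL YR) ++ map (cfg a b) YL) (passR a b (Game YL YR) ++ map (cfg a b) YR) p m l r.
Proof. by rewrite /W cfg_eq nlwinsP. Qed.

Lemma LMc TB a b Y YL q m : LM TB (passL a b Y ++ map (cfg a b) YL) q m =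
  (if a is a'.+1 then W TB a' b Y q m else false) || has (fun y => W TB a b y q m) YL.
Proof. by rewrite /LM has_cat has_map; case: a => [|a] //=; rewrite orbF. Qed.

Lemma RMc TB a b Y YR q m : RM TB (passR a b Y ++ map (cfg a b) YR) q m =
  (if b is b'.+1 then ~~ W TB a b' Y q m else false) || has (fun y => ~~ W TB a b y q m) YR.
Proof. by rewrite /RM has_cat has_map; case: b => [|b] //=; rewrite orbF. Qed.

Lemma W_mono TB a b a' b' YL YR p m : p <= TB ->
  (forall q m, q <= TB -> (if a is a1.+1 then W TB a1 b (Game YL YR) q m else false) ||
        has (fun y => W TB a b y q m) YL ->
        (if a' is a1.+1 then W TB a1 b' (Game YL YR) q m else false) ||
        has (fun y => W TB a' b' y q m) YL) ->
  (forall q m, q <= TB -> (if b' is b1.+1 then ~~ W TB a' b1 (Game YL YR) q m else false) ||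
        has (fun y => ~~ W TB a' b' y q m) YR ->
        (if b is b1.+1 then ~~ W TB a b1 (Game YL YR) q m else false) ||
        has (fun y => ~~ W TB a b y q m) YR) ->
  W TB a b (Game YL YR) p m -> W TB a' b' (Game YL YR) p m.
Proof.
move=> hp HL' HR'; rewrite /W !cfg_eq; apply: lwins_mono => // q m' hq.
- rewrite !LMc; exact: HL'.
- rewrite !RMc; exact: HR'.
Qed.

Lemma L3 TB Y a b a' b' p m : p <= TB -> a <= a' -> b' <= b -> W TB a b Y p m -> W TB a' b' Y p m.
Proof.
elim/game_ind2: Y a b a' b' p m => YL YR IHL IHR a b a' b' p m.
move: {2}(a + b).+1 (ltnSn (a + b)) => k; elim: k a b a' b' p m => [|k IHk] a b a' b' p m hk //.
move=> hp ha hb; apply: W_mono => // q m' hq.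
- case/orP => [h|h]; apply/orP.
  + left; case: a h ha hk => [|a] // h ha hk; case: a' ha => [|a'] // ha.
    apply: IHk h => //; lia.
  + right; apply: has_in_mono h => y hy; apply: IHL => //.
- case/orP => [h|h]; apply/orP.
  + left; case: b' h hb hk => [|b'] // h hb; case: b hb => [|b] // hb hk.
    apply: contra h; apply: IHk => //; lia.
  + right; apply: has_in_mono h => y hy; apply: contra; apply: IHR => //.
Qed.

Definition OL a b YL YR := passL a b (Game YL YR) ++ map (cfg a b) YL.
Definition OR a b YL YR := passR a b (Game YL YR) ++ map (cfg a b) YR.

Lemma WE TB a b YL YR p m : W TB a b (Game YL YR) p m = lwins TB (Game (OL a b YL YR) (OR a b YL YR)) p m.
Proof. by rewrite /W cfg_eq. Qed.

Lemma LMsub TB a b a' b' YL YR q m : q <= TB -> a <= a' -> b' <= b ->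
  LM TB (OL a b YL YR) q m -> LM TB (OL a' b' YL YR) q m.
Proof.
move=> hq ha hb; rewrite /OL !LMc => /orP [h|h]; apply/orP.
- left; case: a h ha => [|a] // h ha; case: a' ha => [|a'] // ha.
  apply: L3 h => //; lia.
- right; apply: has_in_mono h => y hy; exact: L3.
Qed.

Lemma RMsub TB a b a' b' YL YR q m : q <= TB -> a <= a' -> b' <= b ->
  RM TB (OR a' b' YL YR) q m -> RM TB (OR a b YL YR) q m.
Proof.
move=> hq ha hb; rewrite /OR !RMc => /orP [h|h]; apply/orP.
- left; case: b' h hb => [|b'] // h hb; case: b hb => [|b] // hb.
  apply: contra h; apply: L3 => //; lia.
- right; apply: has_in_mono h => y hy; apply: contra; exact: L3.
Qed.

Lemma LMst TB GL q m q' m' : (forall g, lwins TB g q m -> lwins TB g q' m') ->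
  LM TB GL q m -> LM TB GL q' m'.
Proof. move=> H; apply: LM_mono => g _; exact: H. Qed.
Lemma RMst TB GR q m q' m' : (forall g, lwins TB g q' m' -> lwins TB g q m) ->
  RM TB GR q m -> RM TB GR q' m'.
Proof. move=> H; apply: RM_mono => g _; exact: H. Qed.

Lemma L4 TB a b Y p : p <= TB -> W TB a b Y p false -> W TB a.+1 b Y p true.
Proof.
case: Y => YL YR hp hW; have := hW; rewrite !WE => /lwinsP [l hl H].
apply/lwinsP; case: l hl H => [|l] hl H.
- exists 0 => // r hr; case: r hr => [|r] hr.
  + rewrite bT_eq subn0 /OL LMc /= -/(W TB a b (Game YL YR) p false) hW //.
  + rewrite bT_gt //; have := H r.+1 hr; rewrite bF_lt //.
    apply: contra => h; apply/orP; right; apply: RMsub h => //; lia.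
- exists l; first lia. move=> r hr; case: (ltngtP l r) => h.
  + rewrite bT_gt //; have := H r hr.
    case: (ltngtP l.+1 r) => h'.
    * rewrite bF_lt // => h2; apply/negP => h3; move/negP: h2; apply; apply/orP; right.
      apply: RMsub h3 => //; lia.
    * lia.
    * rewrite -h' bF_eq; apply: contra => h3; apply: RMsub h3 => //; lia.
  + rewrite bT_lt //; have := H r hr; rewrite bF_gt; last lia.
    move=> h2; apply/orP; right.
    have h3 : LM TB (OL a b YL YR) (p - l) false by apply: LMst h2 => g; apply: L1s; lia.
    apply: LMsub h3 => //; lia.
  + rewrite -h bT_eq; have := H l ltac:(lia); rewrite bF_gt //.
    move=> h2.
    have h3 : LM TB (OL a b YL YR) (p - l) false by apply: LMst h2 => g; apply: L1s; lia.
    apply: LMsub h3 => //; lia.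
Qed.

Lemma L4' TB a b Y p : p <= TB -> ~~ W TB a b Y p true -> ~~ W TB a b.+1 Y p false.
Proof.
case: Y => YL YR hp hW; have := hW; rewrite !WE => /nlwinsP H.
apply/nlwinsP => l hl; have [r hr hb] := H l hl.
case: (ltngtP l r) => h.
- exists r => //; rewrite bF_lt //; move: hb; rewrite bT_gt // negbK => h2.
  rewrite negbK; apply/orP; right; apply: RMsub h2 => //; lia.
- exists r => //; rewrite bF_gt //; move: hb; rewrite bT_lt //.
  apply: contra => h2; apply/orP; right; apply: LMsub h2 => //; lia.
- move: hb; rewrite -h bT_eq; case: l hl h H => [|l] hl h H hb.
  + exists 0 => //; rewrite bF_eq negbK addn0 /OR RMc /=.
    by rewrite -/(W TB a b (Game YL YR) p true) hW.
  + exists l; first lia. rewrite bF_gt //; apply: contra hb => h2.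
    apply: LMsub h2 => //; lia.
Qed.

Lemma has_none (T : Type) (a : pred T) s : (forall x, List.In x s -> ~~ a x) -> ~~ has a s.
Proof.
elim: s => [|x s IH] //= H; rewrite negb_or; apply/andP; split.
- by apply: H; left.
- by apply: IH => y hy; apply: H; right.
Qed.

Lemma noRM TB a YL YR q m : (forall y, List.In y YR -> W TB a 0 y q m) -> ~~ RM TB (OR a 0 YL YR) q m.
Proof. move=> H; rewrite /OR RMc /=; apply: has_none => y hy; rewrite negbK; exact: H. Qed.

Lemma noLM TB b YL YR q m : (forall y, List.In y YL -> ~~ W TB 0 b y q m) -> ~~ LM TB (OL 0 b YL YR) q m.
Proof. move=> H; rewrite /OL LMc /=; exact: has_none. Qed.

Lemma Pl TB a YL YR p m : p <= TB -> (forall y, List.In y YR -> W TB a 0 y p m) ->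
  W TB a.+1 0 (Game YL YR) p m.
Proof.
move=> hp H; rewrite WE; apply/lwinsP; exists 0 => // r hr.
case: m H => H.
- case: r hr => [|r] hr.
  + rewrite bT_eq subn0 /OL LMc /=; apply/orP; left.
    rewrite WE; apply/lwinsP; exists 0 => // r' hr'; case: r' hr' => [|r'] hr'.
    * rewrite bF_eq addn0; exact: noRM.
    * rewrite bF_lt // negb_or; apply/andP; split; apply: noRM => y hy.
      -- apply: (@L1s _ _ p.+1); first lia. apply: L2; first lia. exact: H.
      -- apply: (@L1s _ _ p); first lia. exact: H.
  + rewrite bT_gt //; apply: noRM => y hy.
    apply: (@L1s _ _ p); first lia. apply: (@L3 _ _ a 0) => //; exact: H.
- case: r hr => [|r] hr.
  + rewrite bF_eq addn0; apply: noRM => y hy; apply: L4 => //; exact: H.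
  + rewrite bF_lt // negb_or; apply/andP; split; apply: noRM => y hy.
    * apply: (@L1s _ _ p.+1); first lia. apply: L2; first lia. apply: L4 => //; exact: H.
    * apply: (@L1s _ _ p); first lia. apply: L4 => //; exact: H.
Qed.

Lemma Pr TB b YL YR p m : p <= TB -> (forall y, List.In y YL -> ~~ W TB 0 b y p m) ->
  ~~ W TB 0 b.+1 (Game YL YR) p m.
Proof.
move=> hp H; rewrite WE; apply/nlwinsP => l hl; exists 0 => //.
case: m H => H.
- case: l hl => [|l] hl.
  + rewrite bT_eq subn0; apply: noLM => y hy; apply: L4' => //; exact: H.
  + rewrite bT_lt // negb_or; apply/andP; split; apply: noLM => y hy;
      have hn := L4' hp (H y hy); apply: contra hn => h.
    * apply: (@L1s _ _ (p - l.+1).+1); first lia. apply: L2 => //; lia.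
    * apply: (@L1s _ _ (p - l.+1)) => //; lia.
- case: l hl => [|l] hl.
  + rewrite bF_eq addn0 negbK /OR RMc /=; apply/orP; left.
    rewrite WE; apply/nlwinsP => l' hl'; exists 0 => //.
    case: l' hl' => [|l'] hl'.
    * rewrite bT_eq subn0; exact: noLM.
    * rewrite bT_lt // negb_or; apply/andP; split; apply: noLM => y hy;
        apply: contra (H y hy) => h.
      -- apply: (@L1s _ _ (p - l'.+1).+1); first lia. apply: L2 => //; lia.
      -- apply: (@L1s _ _ (p - l'.+1)) => //; lia.
  + rewrite bF_gt //; apply: noLM => y hy; apply: contra (H y hy) => h.
    apply: (@L1s _ _ (p - l.+1)); first lia. apply: (@L3 _ _ 0 b.+1 0 b) h => //; lia.
Qed.

Lemma has_noneP (T : Type) (a : pred T) s : ~~ has a s -> forall x, List.In x s -> ~~ a x.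
Proof.
elim: s => [|x s IH] //= H y [<-|hy]; move: H; rewrite negb_or => /andP [h1 h2] //.
exact: IH.
Qed.

Lemma C1 TB Y a b p m : p <= TB -> W TB a b Y p m -> W TB a.+1 b.+1 Y p m.
Proof.
elim/game_ind2: Y a b p m => YL YR IHL IHR a b p m.
move: {2}(a + b).+1 (ltnSn (a + b)) => k; elim: k a b p m => [|k IHk] a b p m hk //.
move=> hp; apply: W_mono => // q m' hq.
- case/orP => [h|h]; apply/orP.
  + left; case: a h hk => [|a] // h hk; apply: IHk h => //; lia.
  + right; apply: has_in_mono h => y hy; exact: IHL.
- case/orP => [h|h]; apply/orP.
  + case: b h hk => [|b] h hk.
    * right; apply/negPn/negP => hn; move/negP: h; apply.
      apply: Pl => // y hy; have := has_noneP hn hy; by rewrite negbK.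
    * left; apply: contra h; apply: IHk => //; lia.
  + right; apply: has_in_mono h => y hy; apply: contra; exact: IHR.
Qed.

Lemma C2 TB Y a b p m : p <= TB -> W TB a.+1 b.+1 Y p m -> W TB a b Y p m.
Proof.
elim/game_ind2: Y a b p m => YL YR IHL IHR a b p m.
move: {2}(a + b).+1 (ltnSn (a + b)) => k; elim: k a b p m => [|k IHk] a b p m hk //.
move=> hp; apply: W_mono => // q m' hq.
- case/orP => [h|h]; apply/orP.
  + case: a h hk => [|a] h hk.
    * right; apply/negPn/negP => hn; move/negP: (@Pr TB b YL YR q m' hq (has_noneP hn)); apply; exact: h.
    * left; apply: IHk h => //; lia.
  + right; apply: has_in_mono h => y hy; exact: IHL.
- case/orP => [h|h]; apply/orP.
  + left; case: b h hk => [|b] // h hk; apply: contra h; apply: IHk => //; lia.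
  + right; apply: has_in_mono h => y hy; apply: contra; exact: IHR.
Qed.

Lemma Cn TB n Y p m : p <= TB -> W TB 0 0 Y p m = W TB n n Y p m.
Proof.
move=> hp; elim: n => [|n IH] //; rewrite IH; apply/idP/idP.
- exact: C1.
- exact: C2.
Qed.

Theorem mainTheorem13 (TB n : nat) : 0 < n ->
  game_eq TB (gsum (intg n) (conj (intg n))) zero.
Proof.
move=> _; split => X p lm hp.
- move=> h; change (W TB n n X p lm); rewrite -Cn //; exact: h.
- move=> h; change (W TB 0 0 X p lm); rewrite (Cn n) //; exact: h.
Qed.
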